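(* For integers $r,k\ge0$ and real $\alpha$ with $\alpha>k>r$, writing $C_\beta:=H_\beta^3+3H_\beta H_\beta^{(2)}+2H_\beta^{(3)}$ and $Q_\beta:=H_\beta^4+6H_\beta^2H_\beta^{(2)}+8H_\beta H_\beta^{(3)}+3\big(H_\beta^{(2)}\big)^2+6H_\beta^{(4)}$, $$\sum_{n=1}^\infty\frac{C_{n+\alpha}}{(n+r)(n+k)}=\frac{k-\alpha}{k-r}\left\{\frac{Q_{\alpha-k}}{\alpha-k}-\sum_{j=1}^k\frac{C_{\alpha+j-k}}{j(\alpha+j-k)}\right\}+\frac{\alpha-r}{k-r}\left\{\frac{Q_{\alpha-r}}{\alpha-r}-\sum_{j=1}^r\frac{C_{\alpha+j-r}}{j(\alpha+j-r)}\right\}.$$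
   Context: Shifted harmonic numbers: for a real $\alpha$ that is not a negative integer, $H_\alpha := \sum_{k=1}^\infty\left(\frac1k-\frac1{k+\alpha}\right)$ and, for integers $m\ge 2$, $H_\alpha^{(m)} := \sum_{k=1}^\infty\left(\frac1{k^m}-\frac1{(k+\alpha)^m}\right)=\zeta(m)-\zeta(m,\alpha+1)$, where $\zeta$ is the Riemann zeta function and $\zeta(s,\alpha+1)=\sum_{n=1}^\infty (n+\alpha)^{-s}$ is the Hurwitz zeta function. Powers such as $H_\alpha^2$ mean $(H_\alpha)^2$. Empty sums are $0$. *)

(* Defs.v *)
From Stdlib Require Import Reals Lra Lia ClassicalEpsilon.
Open Scope R_scope.

(* Value of a real series: the (unique) l with infinite_sum f l, chosen by
   Hilbert's epsilon (only meaningful when the series converges). *)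
Definition series_value (f : nat -> R) : R :=
  epsilon (inhabits 0) (fun l => infinite_sum f l).

(* Shifted harmonic numbers of order m:
   H_a^(m) = sum_{k>=1} (1/k^m - 1/(k+a)^m). (index k = i+1, i >= 0) *)
Definition Hm (m : nat) (a : R) : R :=
  series_value (fun i => / (INR (i + 1)) ^ m - / (INR (i + 1) + a) ^ m).

Definition H (a : R) : R := Hm 1 a.

Definition Cb (b : R) : R :=
  H b ^ 3 + 3 * H b * Hm 2 b + 2 * Hm 3 b.

Definition Qb (b : R) : R :=
  H b ^ 4 + 6 * H b ^ 2 * Hm 2 b + 8 * H b * Hm 3 b + 3 * (Hm 2 b) ^ 2 + 6 * Hm 4 b.

Fixpoint sum1 (n : nat) (f : nat -> R) : R :=
  match n with
  | O => 0
  | S p => sum1 p f + f (S p)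
  end.

(* Main.v *)
Require Import Defs.
From Stdlib Require Import Reals Lra Lia ZArith ClassicalEpsilon.
Open Scope R_scope.

Lemma isum_Un (f : nat -> R) l : infinite_sum f l <-> Un_cv (sum_f_R0 f) l.
Proof. split; intro H; exact H. Qed.

Lemma sv_eq f l : infinite_sum f l -> series_value f = l.
Proof.
  intro H. unfold series_value.
  assert (E : exists l, infinite_sum f l) by (exists l; exact H).
  pose proof (epsilon_spec (inhabits 0) (fun l => infinite_sum f l) E) as H2.
  exact (UL_sequence _ _ _ H2 H).
Qed.

Lemma isum_ext f g l : (forall i, f i = g i) -> infinite_sum f l -> infinite_sum g l.
Proof.
  intros E H. apply isum_Un. apply isum_Un in H.
  intros eps He. destruct (H eps He) as [N HN]. exists N. intros n Hn.
  rewrite <- (sum_eq f g n) by (intros; apply E). auto.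
Qed.

Lemma isum_plus f g a b : infinite_sum f a -> infinite_sum g b ->
  infinite_sum (fun i => f i + g i) (a + b).
Proof.
  intros Ha Hb. apply isum_Un.
  apply (Un_cv_ext (fun n => sum_f_R0 f n + sum_f_R0 g n)).
  - intro n. rewrite sum_plus. reflexivity.
  - apply CV_plus; assumption.
Qed.

Lemma isum_scal c f a : infinite_sum f a -> infinite_sum (fun i => c * f i) (c * a).
Proof.
  intros Ha. apply isum_Un.
  apply (Un_cv_ext (fun n => c * sum_f_R0 f n)).
  - intro n. rewrite scal_sum. apply sum_eq. intros; ring.
  - apply (CV_mult (fun _ => c)); [intros e He; exists O; intros; unfold Rdist; rewrite Rminus_diag, Rabs_R0; lra | assumption].
Qed.

Lemma isum_minus f g a b : infinite_sum f a -> infinite_sum g b ->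
  infinite_sum (fun i => f i - g i) (a - b).
Proof.
  intros Ha Hb.
  apply (isum_ext (fun i => f i + (-1) * g i)); [intro; ring|].
  replace (a - b) with (a + (-1) * b) by ring.
  apply isum_plus; auto. apply isum_scal; auto.
Qed.

Lemma isum_shift1 g l : infinite_sum g l -> infinite_sum (fun i => g (S i)) (l - g O).
Proof.
  intro H. apply isum_Un. apply isum_Un in H.
  intros eps He. destruct (H eps He) as [N HN]. exists N. intros n Hn.
  assert (E : sum_f_R0 (fun i => g (S i)) n = sum_f_R0 g (S n) - g O).
  { rewrite (decomp_sum g (S n)) by lia. simpl pred. ring. }
  rewrite E. unfold Rdist. replace (sum_f_R0 g (S n) - g O - (l - g O)) with (sum_f_R0 g (S n) - l) by ring.
  apply HN. lia.
Qed.

Lemma isum_le f g a b : infinite_sum f a -> infinite_sum g b ->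
  (forall i, f i <= g i) -> a <= b.
Proof.
  intros Ha Hb Hle. apply (Rle_cv_lim (Un:=sum_f_R0 f) (Vn:=sum_f_R0 g)); auto.
  intro n. apply sum_Rle. intros; auto.
Qed.

Lemma isum_bounded f B : (forall i, 0 <= f i) -> (forall N, sum_f_R0 f N <= B) ->
  exists l, infinite_sum f l.
Proof.
  intros Hp HB.
  destruct (growing_cv (sum_f_R0 f)) as [l Hl].
  - intro n. simpl. specialize (Hp (S n)). lra.
  - exists B. intros x [n ->]. apply HB.
  - exists l. exact Hl.
Qed.

Lemma isum_partial_le f l N : infinite_sum f l -> (forall i, 0 <= f i) -> sum_f_R0 f N <= l.
Proof. intros H Hp. apply sum_incr; auto. Qed.

Lemma isum_unique f a b : infinite_sum f a -> infinite_sum f b -> a = b.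
Proof. intros Ha Hb. exact (UL_sequence _ _ _ Ha Hb). Qed.

Lemma cv_invS : Un_cv (fun n => / INR (S n)) 0.
Proof.
  intros eps He. destruct (archimed (/ eps)) as [H1 _].
  assert (Hz : (0 <= up (/ eps))%Z).
  { apply le_IZR. pose proof (Rinv_0_lt_compat eps He). lra. }
  exists (Z.to_nat (up (/ eps))). intros n Hn. unfold Rdist.
  rewrite Rminus_0_r. rewrite Rabs_right.
  2: { apply Rle_ge, Rlt_le, Rinv_0_lt_compat, lt_0_INR; lia. }
  assert (Hn' : IZR (up (/eps)) <= INR n).
  { rewrite <- (Z2Nat.id (up (/eps))) by auto. rewrite <- INR_IZR_INZ. apply le_INR; lia. }
  rewrite S_INR.
  apply (Rmult_lt_reg_l (INR n + 1)). { pose proof (pos_INR n); lra. }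
  rewrite Rinv_r by (pose proof (pos_INR n); lra).
  apply (Rmult_lt_reg_l (/ eps)). { apply Rinv_0_lt_compat; auto. }
  replace (/ eps * ((INR n + 1) * eps)) with (INR n + 1) by (field; lra). lra.
Qed.

Lemma cv_const c : Un_cv (fun _ => c) c.
Proof. intros e He; exists O; intros; unfold Rdist; rewrite Rminus_diag, Rabs_R0; lra. Qed.

Lemma kron (u : nat -> R) l :
  infinite_sum (fun i => (u (S i) - u i) / INR (S i)) l ->
  Un_cv (fun n => u (S n) / INR (S n)) 0.
Proof.
  intro H. set (a := fun i => (u (S i) - u i) / INR (S i)) in *.
  set (P := sum_f_R0 a).
  assert (Id : forall n, u (S n) = u O + INR (S (S n)) * P n - sum_f_R0 P n).
  { induction n.
    - unfold P, a; simpl. field.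
    - assert (Ea : a (S n) * INR (S (S n)) = u (S (S n)) - u (S n)).
      { unfold a. field. apply not_0_INR. lia. }
      replace (u (S (S n))) with (u (S n) + a (S n) * INR (S (S n))) by lra.
      rewrite IHn. unfold P. rewrite !tech5. fold P.
      rewrite !S_INR. ring. }
  assert (Hc : Un_cv (fun n => sum_f_R0 P n / INR (S n)) l).
  { pose proof (Cesaro_1 P l H) as C.
    intros e He. destruct (C e He) as [N HN]. exists N. intros n Hn.
    apply (HN (S n)). lia. }
  apply (Un_cv_ext (fun n => u O * / INR (S n) + P n + P n * / INR (S n) - sum_f_R0 P n / INR (S n))).
  - intro n. rewrite (Id n). rewrite (S_INR (S n)). field. apply not_0_INR. lia.
  - replace 0 with (u O * 0 + l + l * 0 - l) by ring.
    apply CV_minus; [|exact Hc].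
    apply CV_plus; [apply CV_plus|].
    + apply CV_mult; [apply cv_const | apply cv_invS].
    + exact H.
    + apply CV_mult; [exact H | apply cv_invS].
Qed.

Lemma telescope (h : nat -> R) N : sum_f_R0 (fun i => h i - h (S i)) N = h O - h (S N).
Proof. induction N; simpl; [ring|rewrite IHN; ring]. Qed.

Lemma squeeze0 (v : nat -> R) : (forall n, 0 <= v n <= / INR (S n)) -> Un_cv v 0.
Proof.
  intros Hv e He. destruct (cv_invS e He) as [N HN]. exists N. intros n Hn.
  specialize (HN n Hn). specialize (Hv n). unfold Rdist in *.
  rewrite Rminus_0_r in *. rewrite Rabs_right in HN by (apply Rle_ge, Rlt_le, Rinv_0_lt_compat, lt_0_INR; lia).
  rewrite Rabs_right by lra. lra.
Qed.

Lemma exists_nat_ge x : exists n, x <= INR n.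
Proof.
  destruct (archimed x) as [H1 _].
  destruct (Z_lt_le_dec (up x) 0) as [Hz|Hz].
  - exists O. simpl. apply IZR_lt in Hz. lra.
  - exists (Z.to_nat (up x)). rewrite INR_IZR_INZ, Z2Nat.id by auto. lra.
Qed.

Definition hterm (m : nat) (x : R) (i : nat) : R :=
  / (INR (i + 1)) ^ m - / (INR (i + 1) + x) ^ m.

Lemma INR_i1 i : INR (i + 1) = INR i + 1.
Proof. rewrite plus_INR. simpl. ring. Qed.

Lemma pos_i1 i : 0 < INR (i + 1).
Proof. rewrite INR_i1. pose proof (pos_INR i). lra. Qed.

Lemma inv_pow_anti a b m : 0 < a -> a <= b -> / b ^ m <= / a ^ m.
Proof.
  intros Ha Hab. apply Rinv_le_contravar. apply pow_lt; auto. apply pow_incr; lra.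
Qed.

Lemma hterm_mono m x y i : 0 <= x -> x <= y -> hterm m x i <= hterm m y i.
Proof.
  intros Hx Hxy. unfold hterm. pose proof (pos_i1 i).
  pose proof (inv_pow_anti (INR (i+1) + x) (INR (i+1) + y) m ltac:(lra) ltac:(lra)). lra.
Qed.

Lemma hterm_nonneg m x i : 0 <= x -> 0 <= hterm m x i.
Proof.
  intros Hx. unfold hterm. pose proof (pos_i1 i).
  pose proof (inv_pow_anti (INR (i+1)) (INR (i+1) + x) m ltac:(lra) ltac:(lra)). lra.
Qed.

Lemma hterm_bound m n N : sum_f_R0 (hterm m (INR n)) N <= INR n.
Proof.
  revert N. induction n; intro N.
  - unfold hterm. simpl. rewrite <- (sum_eq (fun _ => 0)).
    + clear. induction N; simpl; lra.
    + intros. rewrite Rplus_0_r. ring.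
  - set (g := fun j => / INR (j + 1) ^ m).
    assert (E : forall i, hterm m (INR (S n)) i = hterm m (INR n) i + (g (i + n)%nat - g (S i + n)%nat)).
    { intro i. unfold hterm, g.
      assert (A1 : INR (i+1) + INR (S n) = INR (S i + n + 1)) by (rewrite !plus_INR, !S_INR, ?plus_INR, ?INR_1; ring).
      assert (A2 : INR (i+1) + INR n = INR (i+n+1)) by (rewrite !plus_INR, ?INR_1; ring).
      rewrite A1, A2. ring. }
    rewrite (sum_eq _ _ N (fun i _ => E i)). rewrite sum_plus.
    rewrite (telescope (fun j => g (j + n)%nat) N). cbv beta. rewrite S_INR. simpl (0 + n)%nat. simpl (S N + n)%nat.
    assert (0 <= g (S (N + n))) by (unfold g; apply Rlt_le, Rinv_0_lt_compat, pow_lt, pos_i1).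
    assert (g n <= 1).
    { unfold g. assert (HH : / INR (n+1) ^ m <= / 1 ^ m).
      { apply inv_pow_anti; [lra|]. rewrite INR_i1. pose proof (pos_INR n). lra. }
      rewrite pow1, Rinv_1 in HH. exact HH. }
    specialize (IHn N). lra.
Qed.

Lemma Hm_cv m x : 0 <= x -> infinite_sum (hterm m x) (Hm m x).
Proof.
  intro Hx. destruct (exists_nat_ge x) as [n Hn].
  destruct (isum_bounded (hterm m x) (INR n)) as [l Hl].
  - intro i. apply hterm_nonneg; auto.
  - intro N. eapply Rle_trans; [|apply (hterm_bound m n N)].
    apply sum_Rle. intros. apply hterm_mono; auto.
  - unfold Hm. fold (hterm m x). rewrite (sv_eq _ _ Hl). exact Hl.
Qed.

Lemma Hm_val m x l : 0 <= x -> infinite_sum (hterm m x) l -> Hm m x = l.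
Proof. intros Hx H. exact (isum_unique _ _ _ (Hm_cv m x Hx) H). Qed.

Lemma Hm_0 m : Hm m 0 = 0.
Proof.
  apply Hm_val; [lra|]. apply (isum_ext (fun _ => 0)).
  - intro i. unfold hterm. rewrite Rplus_0_r. ring.
  - intros e He. exists O. intros n _. unfold Rdist.
    replace (sum_f_R0 (fun _ => 0) n) with 0. rewrite Rminus_0_r, Rabs_R0; lra.
    clear. induction n; simpl; lra.
Qed.

Lemma Hm_mono m x y : 0 <= x -> x <= y -> Hm m x <= Hm m y.
Proof.
  intros Hx Hxy. apply (isum_le (hterm m x) (hterm m y)); try apply Hm_cv; try lra.
  intro i. apply hterm_mono; auto.
Qed.

Lemma Hm_nonneg m x : 0 <= x -> 0 <= Hm m x.
Proof. intro Hx. rewrite <- (Hm_0 m). apply Hm_mono; lra. Qed.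

Lemma Hm_shift m x : (1 <= m)%nat -> 0 <= x -> Hm m (x + 1) = Hm m x + / (x + 1) ^ m.
Proof.
  intros Hm1 Hx. apply Hm_val; [lra|].
  assert (Id : forall N, sum_f_R0 (hterm m (x+1)) N =
     sum_f_R0 (hterm m x) N + / (x+1) ^ m - / (INR (N+1) + (x+1)) ^ m).
  { induction N.
    - simpl. unfold hterm. replace (INR (0+1)) with 1 by (simpl; ring).
      replace (1 + x) with (x + 1) by ring. ring.
    - rewrite !tech5, IHN. unfold hterm.
      assert (E : INR (S N + 1) = INR (N + 1) + 1) by (rewrite !INR_i1, S_INR; ring).
      rewrite E. replace (INR (N + 1) + 1 + x) with (INR (N + 1) + (x + 1)) by ring. ring. }
  apply isum_Un. apply (Un_cv_ext _ _ (fun N => eq_sym (Id N))).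
  replace (Hm m x + / (x + 1) ^ m) with (Hm m x + / (x + 1) ^ m - 0) by ring.
  apply CV_minus. apply CV_plus. apply (Hm_cv m x Hx). apply cv_const.
  apply squeeze0. intro n. pose proof (pos_i1 n) as Hp. split.
  - apply Rlt_le, Rinv_0_lt_compat, pow_lt. lra.
  - assert (HH : INR (S n) <= (INR (n + 1) + (x + 1)) ^ m).
    { eapply Rle_trans; [| apply (Rle_pow _ 1 m); [|lia]].
      - rewrite pow_1. rewrite INR_i1, S_INR. lra.
      - rewrite INR_i1. pose proof (pos_INR n). lra. }
    apply Rinv_le_contravar; auto. apply lt_0_INR; lia.
Qed.

Definition ee (j : nat) (x : R) : R :=
  match j with
  | O => 1
  | 1 => H x
  | 2 => H x ^ 2 + Hm 2 x
  | 3 => Cb x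
  | 4 => Qb x
  | _ => 0
  end.

Lemma ee_shift j x : (1 <= j <= 4)%nat -> 0 <= x ->
  ee j (x + 1) = ee j x + INR j * ee (j - 1) (x + 1) / (x + 1).
Proof.
  intros Hj Hx.
  assert (Hx1 : x + 1 <> 0) by lra.
  destruct j as [|[|[|[|[|j]]]]]; try lia; simpl (_ - _)%nat; unfold ee, Cb, Qb, H;
  rewrite !Hm_shift by (auto; lia); simpl INR; field; auto.
Qed.

Lemma ee_0 j : (1 <= j)%nat -> ee j 0 = 0.
Proof.
  intro Hj. unfold ee, Cb, Qb, H. rewrite !Hm_0.
  destruct j as [|[|[|[|[|j]]]]]; try lia; ring.
Qed.

Lemma ee_nonneg j x : 0 <= x -> 0 <= ee j x.
Proof.
  intro Hx. unfold ee, Cb, Qb, H.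
  pose proof (Hm_nonneg 1 x Hx). pose proof (Hm_nonneg 2 x Hx).
  pose proof (Hm_nonneg 3 x Hx). pose proof (Hm_nonneg 4 x Hx).
  destruct j as [|[|[|[|[|j]]]]]; try lra.
  - nra.
  - assert (0 <= Hm 1 x ^ 3) by (apply pow_le; lra). nra.
  - assert (0 <= Hm 1 x ^ 4) by (apply pow_le; lra). 
    assert (0 <= Hm 1 x ^ 2) by (apply pow_le; lra). nra.
Qed.

Lemma ee_mono j x y : 0 <= x -> x <= y -> ee j x <= ee j y.
Proof.
  intros Hx Hxy. unfold ee, Cb, Qb, H.
  pose proof (Hm_nonneg 1 x Hx). pose proof (Hm_nonneg 2 x Hx).
  pose proof (Hm_nonneg 3 x Hx). pose proof (Hm_nonneg 4 x Hx).
  pose proof (Hm_mono 1 x y Hx Hxy). pose proof (Hm_mono 2 x y Hx Hxy).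
  pose proof (Hm_mono 3 x y Hx Hxy). pose proof (Hm_mono 4 x y Hx Hxy).
  set (a := Hm 1 x) in *. set (a' := Hm 1 y) in *.
  set (b := Hm 2 x) in *. set (b' := Hm 2 y) in *.
  set (c := Hm 3 x) in *. set (c' := Hm 3 y) in *.
  set (d := Hm 4 x) in *. set (d' := Hm 4 y) in *.
  assert (P2 : a ^ 2 <= a' ^ 2) by (apply pow_incr; lra).
  assert (P3 : a ^ 3 <= a' ^ 3) by (apply pow_incr; lra).
  assert (P4 : a ^ 4 <= a' ^ 4) by (apply pow_incr; lra).
  assert (Q1 : a * b <= a' * b') by (apply Rmult_le_compat; lra).
  assert (Q2 : a * c <= a' * c') by (apply Rmult_le_compat; lra).
  assert (Q3 : b ^ 2 <= b' ^ 2) by (apply pow_incr; lra).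
  assert (Q4 : a ^ 2 * b <= a' ^ 2 * b') by (apply Rmult_le_compat; try lra; apply pow_le; lra).
  destruct j as [|[|[|[|[|j]]]]]; lra.
Qed.

Lemma sbp (w : nat -> R) N :
  sum_f_R0 (fun i => w (S i) * (/ INR (S i) - / INR (S (S i)))) N =
  w O + sum_f_R0 (fun i => (w (S i) - w i) / INR (S i)) N - w (S N) / INR (S (S N)).
Proof.
  induction N.
  - simpl. field.
  - rewrite !tech5, IHN. rewrite !S_INR.
    pose proof (pos_INR N). field. lra.
Qed.

Definition tterm (j : nat) (x : R) (i : nat) : R :=
  ee j (INR (S i) + x) / (INR (S i) * (INR (S i) + x)).

Definition Tv j x := series_value (tterm j x).

Lemma INRS_pos i : 0 < INR (S i).
Proof. apply lt_0_INR. lia. Qed.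

Lemma tterm_nonneg j x i : 0 <= x -> 0 <= tterm j x i.
Proof.
  intro Hx. unfold tterm. pose proof (INRS_pos i).
  apply Rmult_le_pos. apply ee_nonneg. lra.
  apply Rlt_le, Rinv_0_lt_compat. apply Rmult_lt_0_compat; lra.
Qed.

Lemma ee_diff j x i : (1 <= j <= 4)%nat -> 0 <= x ->
  (ee j (INR (S i) + x) - ee j (INR i + x)) / INR (S i) = INR j * tterm (j - 1) x i.
Proof.
  intros Hj Hx. pose proof (pos_INR i).
  replace (INR (S i) + x) with ((INR i + x) + 1) by (rewrite S_INR; ring).
  rewrite ee_shift by (auto; lra). unfold tterm.
  replace (INR (S i) + x) with ((INR i + x) + 1) by (rewrite S_INR; ring).
  rewrite S_INR. field. lra.
Qed.

Lemma bnd_coef m x : 1 <= m -> 0 <= x -> / (m * (m + x)) <= 2 * (/ m - / (m + 1)).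
Proof.
  intros Hm Hx.
  replace (2 * (/ m - / (m + 1))) with (/ (m * (m + 1) / 2)) by (field; lra).
  apply Rinv_le_contravar. nra. nra.
Qed.

Lemma tterm_bnd j x i : 0 <= x ->
  tterm j x i <= 2 * (ee j (INR (S i) + x) * (/ INR (S i) - / INR (S (S i)))).
Proof.
  intro Hx. unfold tterm. pose proof (ee_nonneg j (INR (S i) + x) ltac:(pose proof (INRS_pos i); lra)).
  assert (H1 : 1 <= INR (S i)) by (rewrite S_INR; pose proof (pos_INR i); lra).
  pose proof (bnd_coef (INR (S i)) x H1 Hx). rewrite (S_INR (S i)). unfold Rdiv.
  replace (2 * (ee j (INR (S i) + x) * (/ INR (S i) - / (INR (S i) + 1))))
    with (ee j (INR (S i) + x) * (2 * (/ INR (S i) - / (INR (S i) + 1)))) by ring.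
  apply Rmult_le_compat_l; auto.
Qed.

Lemma T_partial_bnd j x N B : 0 <= x ->
  (forall N, sum_f_R0 (fun i => (ee j (INR (S i) + x) - ee j (INR i + x)) / INR (S i)) N <= B) ->
  sum_f_R0 (tterm j x) N <= 2 * (ee j x + B).
Proof.
  intros Hx HB. set (w := fun i => ee j (INR i + x)).
  assert (Hle : sum_f_R0 (tterm j x) N <= 2 * sum_f_R0 (fun i => w (S i) * (/ INR (S i) - / INR (S (S i)))) N).
  { rewrite scal_sum. apply sum_Rle. intros i _. rewrite Rmult_comm. apply tterm_bnd; auto. }
  rewrite sbp in Hle. unfold w in Hle. replace (INR 0 + x) with x in Hle by (simpl; ring).
  specialize (HB N).
  assert (0 <= ee j (INR (S N) + x) / INR (S (S N))).
  { apply Rmult_le_pos. apply ee_nonneg. pose proof (INRS_pos N); lra. apply Rlt_le, Rinv_0_lt_compat, INRS_pos. }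
  lra.
Qed.

Lemma T_cv j x : (j <= 3)%nat -> 0 <= x -> infinite_sum (tterm j x) (Tv j x).
Proof.
  intros Hj Hx. induction j as [|j IH].
  - destruct (isum_bounded (tterm 0 x) (2 * (1 + 0))) as [l Hl].
    + intro; apply tterm_nonneg; auto.
    + intro N. apply (T_partial_bnd 0 x N 0 Hx).
      intro M. simpl ee. rewrite <- (sum_eq (fun _ => 0)).
      * clear. induction M; simpl; lra.
      * intros. unfold Rdiv. ring.
    + unfold Tv. rewrite (sv_eq _ _ Hl). exact Hl.
  - specialize (IH ltac:(lia)).
    destruct (isum_bounded (tterm (S j) x) (2 * (ee (S j) x + INR (S j) * Tv j x))) as [l Hl].
    + intro; apply tterm_nonneg; auto.
    + intro N. apply (T_partial_bnd (S j) x N _ Hx).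
      intro M. rewrite (sum_eq _ (fun i => INR (S j) * tterm j x i)).
      * replace (sum_f_R0 (fun i => INR (S j) * tterm j x i) M) with (INR (S j) * sum_f_R0 (tterm j x) M)
          by (rewrite scal_sum; apply sum_eq; intros; ring).
        apply Rmult_le_compat_l. apply pos_INR.
        apply isum_partial_le; auto. intro; apply tterm_nonneg; auto.
      * intros i _. rewrite ee_diff by (auto; lia). f_equal. f_equal. lia.
    + unfold Tv. rewrite (sv_eq _ _ Hl). exact Hl.
Qed.

Lemma ee_diff' j x i : (j <= 4)%nat -> 0 <= x ->
  (ee j (INR (S i) + x) - ee j (INR i + x)) / INR (S i) = INR j * tterm (j - 1) x i.
Proof.
  intros Hj Hx. destruct j. - simpl. unfold Rdiv. ring. - apply ee_diff; auto; lia.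
Qed.

Lemma squeeze_sub (a b : nat -> R) : Un_cv a 0 -> (forall n, 0 <= b n <= a (S n)) -> Un_cv b 0.
Proof.
  intros Ha Hb e He. destruct (Ha e He) as [N HN]. exists N. intros n Hn.
  specialize (HN (S n) ltac:(lia)). specialize (Hb n). unfold Rdist in *.
  rewrite Rminus_0_r in *. rewrite Rabs_right by lra. rewrite Rabs_right in HN by lra. lra.
Qed.

Lemma ee_kron j x : (1 <= j <= 3)%nat -> 0 <= x ->
  Un_cv (fun n => ee j (INR (S n) + x) / INR (S n)) 0.
Proof.
  intros Hj Hx. apply (kron (fun i => ee j (INR i + x)) (INR j * Tv (j-1) x)).
  apply (isum_ext (fun i => INR j * tterm (j-1) x i)).
  - intro i. rewrite ee_diff' by (auto; lia). reflexivity.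
  - apply isum_scal. apply T_cv; auto; lia.
Qed.

Lemma sbp2 (w : nat -> R) x N : 0 <= x ->
  sum_f_R0 (fun i => w (S (S i)) * (/ INR (S i) - / (INR (S (S i)) + x))
                     - w (S i) * (/ INR (S i) - / (INR (S i) + x))) N =
  sum_f_R0 (fun i => (w (S (S i)) - w (S i)) / INR (S i)) N + w 1%nat / (1 + x)
  - w (S (S N)) / (INR (S (S N)) + x).
Proof.
  intro Hx. induction N.
  - simpl. field. lra.
  - rewrite !tech5, IHN. pose proof (pos_INR N). rewrite !S_INR. field. lra.
Qed.

Lemma T_step j x : (1 <= j <= 3)%nat -> 0 <= x ->
  (x + 1) * Tv j (x + 1) - x * Tv j x = INR j * Tv (j - 1) (x + 1) + ee j (x + 1) / (x + 1).
Proof.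
  intros Hj Hx.
  set (w := fun i => ee j (INR i + x)).
  assert (Hterm : forall i, (x + 1) * tterm j (x + 1) i - x * tterm j x i =
     w (S (S i)) * (/ INR (S i) - / (INR (S (S i)) + x)) - w (S i) * (/ INR (S i) - / (INR (S i) + x))).
  { intro i. unfold tterm, w. pose proof (INRS_pos i).
    replace (INR (S i) + (x + 1)) with (INR (S (S i)) + x) by (rewrite (S_INR (S i)); ring).
    rewrite (S_INR (S i)). field. lra. }
  assert (Id : forall N, sum_f_R0 (fun i => (x + 1) * tterm j (x + 1) i - x * tterm j x i) N =
     sum_f_R0 (fun i => INR j * tterm (j - 1) (x + 1) i) N + w 1%nat / (1 + x)
       - w (S (S N)) / (INR (S (S N)) + x)).
  { intro N. rewrite (sum_eq _ _ N (fun i _ => Hterm i)). rewrite sbp2 by auto.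
    f_equal. f_equal. apply sum_eq. intros i _. unfold w.
    rewrite <- (ee_diff' j (x + 1) i) by (first [lia|lra]).
    rewrite !S_INR. f_equal. f_equal; f_equal; ring. }
  apply (isum_unique (fun i => (x + 1) * tterm j (x + 1) i - x * tterm j x i)).
  - apply isum_minus; apply isum_scal; apply T_cv; first [lia|lra].
  - apply isum_Un. apply (Un_cv_ext _ _ (fun N => eq_sym (Id N))).
    replace (INR j * Tv (j - 1) (x + 1) + ee j (x + 1) / (x + 1)) with
      (INR j * Tv (j - 1) (x + 1) + w 1%nat / (1 + x) - 0)
      by (unfold w; simpl INR; replace (1 + x) with (x + 1) by ring; ring).
    apply CV_minus. apply CV_plus.
    + apply (isum_scal (INR j) (tterm (j-1) (x+1))). apply T_cv; first [lia|lra].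
    + apply cv_const.
    + apply (squeeze_sub (fun n => ee j (INR (S n) + x) / INR (S n))).
      * apply ee_kron; auto.
      * intro n. unfold w. pose proof (INRS_pos (S n)). split.
        -- apply Rmult_le_pos. apply ee_nonneg; lra. apply Rlt_le, Rinv_0_lt_compat; lra.
        -- unfold Rdiv. apply Rmult_le_compat_l. apply ee_nonneg; lra.
           apply Rinv_le_contravar; lra.
Qed.

Lemma T0_main x : 0 <= x -> x * Tv 0 x = ee 1 x.
Proof.
  intro Hx. simpl ee. unfold H.
  apply (isum_unique (fun i => x * tterm 0 x i)).
  - apply isum_scal. apply T_cv; auto.
  - apply (isum_ext (hterm 1 x)). 2: apply Hm_cv; auto.
    intro i. unfold hterm, tterm, ee. rewrite Nat.add_1_r. pose proof (INRS_pos i).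
    field. lra.
Qed.

Lemma xT_mono j x y : (j <= 3)%nat -> 0 <= x -> x <= y -> x * Tv j x <= y * Tv j y.
Proof.
  intros Hj Hx Hxy. apply (isum_le (fun i => x * tterm j x i) (fun i => y * tterm j y i)).
  - apply isum_scal, T_cv; auto.
  - apply isum_scal, T_cv; auto; lra.
  - intro i. unfold tterm. pose proof (INRS_pos i) as Hm.
    set (m := INR (S i)) in *.
    assert (E1 : x * (ee j (m + x) / (m * (m + x))) = ee j (m + x) * (x / (m * (m + x)))) by (field; lra).
    assert (E2 : y * (ee j (m + y) / (m * (m + y))) = ee j (m + y) * (y / (m * (m + y)))) by (field; lra).
    rewrite E1, E2. apply Rmult_le_compat.
    + apply ee_nonneg; lra.
    + apply Rmult_le_pos; [lra|]. apply Rlt_le, Rinv_0_lt_compat. nra.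
    + apply ee_mono; lra.
    + unfold Rdiv. apply (Rmult_le_reg_r ((m * (m + x)) * (m * (m + y)))). { apply Rmult_lt_0_compat; apply Rmult_lt_0_compat; lra. }
      replace (x * / (m * (m + x)) * (m * (m + x) * (m * (m + y)))) with (x * (m * (m + y))) by (field; lra).
      replace (y * / (m * (m + y)) * (m * (m + x) * (m * (m + y)))) with (y * (m * (m + x))) by (field; lra).
      nra.
Qed.

Lemma floor_nat x : 0 <= x -> exists M, INR M <= x < INR M + 1.
Proof.
  intro Hx. destruct (exists_nat_ge x) as [n Hn].
  assert (P : forall n x, 0 <= x < INR n + 1 -> exists M, INR M <= x < INR M + 1).
  { clear. induction n; intros x Hx.
    - exists O. simpl in *. lra.
    - destruct (Rlt_le_dec x (INR n + 1)) as [h|h].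
      + apply IHn. lra.
      + exists (S n). rewrite S_INR in *. lra. }
  apply (P n). lra.
Qed.

Lemma T_main j x : (j <= 2)%nat -> 0 <= x -> x * Tv j x = ee (S j) x.
Proof.
  revert x. induction j as [|j IH]; intros x Hj Hx.
  - apply T0_main; auto.
  - 
    set (F := fun y => y * Tv (S j) y - ee (S (S j)) y).
    assert (Fstep : forall y, 0 <= y -> F (y + 1) = F y).
    { intros y Hy. unfold F.
      pose proof (T_step (S j) y ltac:(lia) Hy) as TS.
      pose proof (IH (y + 1) ltac:(lia) ltac:(lra)) as IH1.
      rewrite (ee_shift (S (S j)) y) by (first [lia|lra]).
      replace (S (S j) - 1)%nat with (S j) by lia. replace (S j - 1)%nat with j in TS by lia.
      rewrite !S_INR in *.
      replace (Tv j (y + 1)) with (ee (S j) (y + 1) / (y + 1)) in TS by (rewrite <- IH1; field; lra).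
      lra. }
    assert (F0 : F 0 = 0) by (unfold F; rewrite ee_0 by lia; ring).
    assert (Fn : forall n, F (INR n) = 0).
    { induction n. simpl. exact F0. rewrite S_INR, Fstep by apply pos_INR. exact IHn. }
    assert (Fxn : forall n, F (x + INR n) = F x).
    { induction n. simpl. rewrite Rplus_0_r. reflexivity.
      rewrite S_INR, <- Rplus_assoc, Fstep by (pose proof (pos_INR n); lra). exact IHn. }
    destruct (floor_nat x Hx) as [M0 HM0].
    assert (Bnd : forall n, Rabs (F x) <= ee (S (S j)) (INR (M0 + n) + 1) - ee (S (S j)) (INR (M0 + n))).
    { intro n. rewrite <- (Fxn n). set (M := (M0 + n)%nat).
      assert (HM : INR M <= x + INR n <= INR M + 1) by (unfold M; rewrite plus_INR; lra).
      pose proof (Fn M) as FM. pose proof (Fn (S M)) as FM1. rewrite S_INR in FM1.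
      unfold F in *. pose proof (pos_INR M).
      pose proof (xT_mono (S j) (INR M) (x + INR n) ltac:(lia) ltac:(lra) ltac:(lra)).
      pose proof (xT_mono (S j) (x + INR n) (INR M + 1) ltac:(lia) ltac:(lra) ltac:(lra)).
      pose proof (ee_mono (S (S j)) (INR M) (x + INR n) ltac:(lra) ltac:(lra)).
      pose proof (ee_mono (S (S j)) (x + INR n) (INR M + 1) ltac:(lra) ltac:(lra)).
      apply Rabs_le. lra. }
    assert (Lim : Un_cv (fun n => ee (S (S j)) (INR n + 1) - ee (S (S j)) (INR n)) 0).
    { apply (Un_cv_ext (fun n => INR (S (S j)) * (ee (S j) (INR (S n) + 0) / INR (S n)))).
      - intro n. rewrite (ee_shift (S (S j)) (INR n)) by (first [lia|apply pos_INR]).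
        replace (S (S j) - 1)%nat with (S j) by lia. rewrite Rplus_0_r, S_INR, (S_INR n). field.
        pose proof (pos_INR n); lra.
      - replace 0 with (INR (S (S j)) * 0) by ring. apply CV_mult. apply cv_const.
        apply ee_kron; lia || lra. }
    destruct (Req_dec (F x) 0) as [Z|NZ]; [unfold F in Z; lra|exfalso].
    assert (Hp : Rabs (F x) > 0) by (apply Rabs_pos_lt; auto).
    destruct (Lim _ Hp) as [N HN]. specialize (HN (M0 + N)%nat ltac:(lia)).
    specialize (Bnd N). unfold Rdist in HN. rewrite Rminus_0_r in HN.
    pose proof (Rle_abs (ee (S (S j)) (INR (M0 + N) + 1) - ee (S (S j)) (INR (M0 + N)))). lra.
Qed.

Lemma squeeze_le (a b : nat -> R) : Un_cv a 0 -> (forall n, 0 <= b n <= a n) -> Un_cv b 0.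
Proof.
  intros Ha Hb e He. destruct (Ha e He) as [N HN]. exists N. intros n Hn.
  specialize (HN n Hn). specialize (Hb n). unfold Rdist in *.
  rewrite Rminus_0_r in *. rewrite Rabs_right by lra. rewrite Rabs_right in HN by lra. lra.
Qed.

Lemma I3 b : 0 < b ->
  infinite_sum (fun i => Cb (INR (S i) + b) / (INR (S i) * (INR (S i) + 1))) (Cb b * (b + 3) / b).
Proof.
  intro Hb. set (w := fun i => ee 3 (INR i + b)).
  apply (isum_ext (fun i => w (S i) * (/ INR (S i) - / INR (S (S i))))).
  { intro i. unfold w, ee. rewrite (S_INR (S i)). pose proof (INRS_pos i). field. lra. }
  apply isum_Un.
  apply (Un_cv_ext _ _ (fun N => eq_sym (sbp w N))).
  replace (Cb b * (b + 3) / b) with (w O + INR 3 * Tv 2 b - 0).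
  2: { unfold w. replace (INR 0 + b) with b by (simpl; ring).
       pose proof (T_main 2 b ltac:(lia) ltac:(lra)) as TM. simpl ee in *.
       replace (Tv 2 b) with (Cb b / b) by (rewrite <- TM; field; lra). simpl INR. field. lra. }
  apply CV_minus. apply CV_plus. apply cv_const.
  - apply (isum_ext (fun i => INR 3 * tterm 2 b i)).
    + intro i. unfold w. rewrite ee_diff' by (first [lia|lra]). reflexivity.
    + apply isum_scal. apply T_cv; lia || lra.
  - apply (squeeze_le (fun n => ee 3 (INR (S n) + b) / INR (S n))).
    + apply ee_kron; lia || lra.
    + intro n. unfold w. pose proof (INRS_pos n). pose proof (INRS_pos (S n)). split.
      * apply Rmult_le_pos. apply ee_nonneg; lra. apply Rlt_le, Rinv_0_lt_compat; lra.
      * unfold Rdiv. apply Rmult_le_compat_l. apply ee_nonneg; lra.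
        apply Rinv_le_contravar; auto. rewrite (S_INR (S n)). lra.
Qed.

Lemma isum_shiftn g l t : infinite_sum g l ->
  infinite_sum (fun i => g (i + t)%nat) (l - sum1 t (fun j => g (j - 1)%nat)).
Proof.
  intro H0. induction t.
  - simpl. rewrite Rminus_0_r. apply (isum_ext g); [intro i; rewrite Nat.add_0_r; reflexivity | exact H0].
  - apply isum_shift1 in IHt. simpl sum1.
    apply (isum_ext _ _ _ (fun i => f_equal g (eq_sym (Nat.add_succ_r i t))) ) in IHt.
    replace (l - (sum1 t (fun j => g (j - 1)%nat) + g (t - 0)%nat)) with
      (l - sum1 t (fun j => g (j - 1)%nat) - g (0 + t)%nat) by (rewrite Nat.sub_0_r; simpl; ring).
    exact IHt.
Qed.

Lemma sum1_first t f : sum1 (S t) f = f 1%nat + sum1 t (fun j => f (S j)).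
Proof. induction t; simpl in *. ring. rewrite IHt. ring. Qed.

Lemma sum1_lin t f g a b : sum1 t (fun j => a * f j + b * g j) = a * sum1 t f + b * sum1 t g.
Proof. induction t; simpl. ring. rewrite IHt. ring. Qed.

Lemma sum1_ext t f g : (forall j, (1 <= j <= t)%nat -> f j = g j) -> sum1 t f = sum1 t g.
Proof.
  induction t; intro E; simpl; [reflexivity|].
  rewrite IHt by (intros; apply E; lia). rewrite (E (S t)) by lia. reflexivity.
Qed.

Definition Fv (alpha : R) (s : nat) : R :=
  Qb (alpha - INR s) - (alpha - INR s) *
    sum1 s (fun j => Cb (alpha + INR j - INR s) / (INR j * (alpha + INR j - INR s))).

Lemma piece alpha t : INR t + 1 < alpha ->
  infinite_sum (fun i => Cb (INR (i + 1) + alpha) *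
       (/ (INR (i + 1) + INR t) - / (INR (i + 1) + INR (S t))))
    (Fv alpha t - Fv alpha (S t)).
Proof.
  intro Ht. set (b := alpha - INR t).
  assert (Hb : 1 < b) by (unfold b; lra).
  set (g := fun i => Cb (INR (S i) + b) / (INR (S i) * (INR (S i) + 1))).
  pose proof (isum_shiftn g _ t (I3 b ltac:(lra))) as HS.
  apply (isum_ext (fun i => g (i + t)%nat)).
  { intro i. unfold g. rewrite Nat.add_1_r.
    assert (E1 : INR (S (i + t)) = INR (S i) + INR t) by (rewrite S_INR, plus_INR, S_INR; ring).
    rewrite E1, (S_INR t). unfold b. pose proof (INRS_pos i). pose proof (pos_INR t).
    replace (INR (S i) + INR t + (alpha - INR t)) with (INR (S i) + alpha) by ring.
    field. lra. }
  replace (Fv alpha t - Fv alpha (S t)) with (Cb b * (b + 3) / b - sum1 t (fun j => g (j - 1)%nat)).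
  exact HS.
  unfold Fv. rewrite sum1_first.
  assert (EQ : Qb (alpha - INR t) = Qb (alpha - INR (S t)) + 4 * Cb (alpha - INR t) / (alpha - INR t)).
  { replace (alpha - INR t) with ((alpha - INR (S t)) + 1) by (rewrite S_INR; ring).
    change (Qb (alpha - INR (S t) + 1)) with (ee 4 (alpha - INR (S t) + 1)).
    rewrite ee_shift by (first [lia | rewrite S_INR; lra]). replace (INR 4) with 4 by (simpl; ring). reflexivity. }
  rewrite EQ. fold b.
  replace (alpha - INR (S t)) with (b - 1) by (unfold b; rewrite S_INR; ring).
  replace (alpha + INR 1 - INR (S t)) with b by (unfold b; rewrite (S_INR t), INR_1; ring).
  set (A := fun j => Cb (alpha + INR j - INR t) / (INR j * (alpha + INR j - INR t))).
  rewrite (sum1_ext t (fun j => Cb (alpha + INR (S j) - INR (S t)) / (INR (S j) * (alpha + INR (S j) - INR (S t))))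
     (fun j => Cb (alpha + INR j - INR t) / ((INR j + 1) * (alpha + INR j - INR t))))
    by (intros j _; rewrite !S_INR; f_equal; f_equal; ring).
  rewrite (sum1_ext t (fun j => g (j - 1)%nat)
     (fun j => b * A j + (- (b - 1)) * (Cb (alpha + INR j - INR t) / ((INR j + 1) * (alpha + INR j - INR t))))).
  - rewrite sum1_lin. simpl INR. field. lra.
  - intros j Hj. unfold g, A. replace (S (j - 1)) with j by lia.
    assert (Hj1 : 1 <= INR j) by (replace 1 with (INR 1) by reflexivity; apply le_INR; lia).
    assert (Hp : 0 < alpha + INR j - INR t) by (unfold b in Hb; lra).
    replace (INR j + b) with (alpha + INR j - INR t) by (unfold b; ring).
    unfold b. field. lra.
Qed.

Lemma chain alpha r d : INR (r + d) < alpha ->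
  infinite_sum (fun i => Cb (INR (i + 1) + alpha) *
       (/ (INR (i + 1) + INR r) - / (INR (i + 1) + INR (r + d))))
    (Fv alpha r - Fv alpha (r + d)).
Proof.
  induction d; intro Hd.
  - rewrite Nat.add_0_r, Rminus_diag.
    apply (isum_ext (fun _ => 0)). intro i. ring.
    intros e He. exists O. intros n _. unfold Rdist.
    replace (sum_f_R0 (fun _ => 0) n) with 0. rewrite Rminus_0_r, Rabs_R0; lra.
    clear. induction n; simpl; lra.
  - assert (H1 : INR (r + d) + 1 < alpha) by (rewrite Nat.add_succ_r, S_INR in Hd; lra).
    pose proof (isum_plus _ _ _ _ (IHd ltac:(lra)) (piece alpha (r + d) H1)) as P.
    rewrite Nat.add_succ_r.
    replace (Fv alpha r - Fv alpha (S (r + d))) with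
      (Fv alpha r - Fv alpha (r + d) + (Fv alpha (r + d) - Fv alpha (S (r + d)))) by ring.
    refine (isum_ext _ _ _ _ P). intro i. cbv beta.
    rewrite (S_INR (r + d)). ring.
Qed.

Theorem theorem2p7 (r k : nat) (alpha : R) :
  (r < k)%nat -> INR k < alpha ->
  infinite_sum
    (fun i => let n := INR (i + 1) in
       Cb (n + alpha) / ((n + INR r) * (n + INR k)))
    ((INR k - alpha) / (INR k - INR r) *
       (Qb (alpha - INR k) / (alpha - INR k)
        - sum1 k (fun j => Cb (alpha + INR j - INR k) /
                             (INR j * (alpha + INR j - INR k))))
     + (alpha - INR r) / (INR k - INR r) *
       (Qb (alpha - INR r) / (alpha - INR r)
        - sum1 r (fun j => Cb (alpha + INR j - INR r) /
                             (INR j * (alpha + INR j - INR r))))).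
Proof.
  intros Hrk Hk.
  assert (Hrk' : INR r < INR k) by (apply lt_INR; auto).
  assert (Hr0 : 0 <= INR r) by apply pos_INR.
  pose proof (chain alpha r (k - r) ltac:(replace (r + (k - r))%nat with k by lia; lra)) as C.
  replace (r + (k - r))%nat with k in C by lia.
  apply (isum_scal (/ (INR k - INR r))) in C.
  replace ((INR k - alpha) / (INR k - INR r) *
       (Qb (alpha - INR k) / (alpha - INR k)
        - sum1 k (fun j => Cb (alpha + INR j - INR k) /
                             (INR j * (alpha + INR j - INR k))))
     + (alpha - INR r) / (INR k - INR r) *
       (Qb (alpha - INR r) / (alpha - INR r)
        - sum1 r (fun j => Cb (alpha + INR j - INR r) /
                             (INR j * (alpha + INR j - INR r)))))
    with (/ (INR k - INR r) * (Fv alpha r - Fv alpha k)).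
  2: { unfold Fv. field. lra. }
  refine (isum_ext _ _ _ _ C). intro i.
  cbv beta zeta. pose proof (pos_i1 i). field. lra.
Qed.
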